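(* Let $a,b$ be integers with $0<b<a$, let $S=\langle a,a+1,\ldots,a+b\rangle$ with conductor $c$, and let $m\ge 2c-1$. Let $q$ be a positive integer with $qb<a$. Then $\mathrm D(m+qa+qb)\cap[m,\infty)$ is an ordered amenable set (that is, an ordered $(S,m,r)$-amenable set, where $r$ is its cardinality).
   Context: For $x\in S$, $\mathrm D(x)=\{\alpha\in S\mid x-\alpha\in S\}$. A set $M=\{m_1<\cdots<m_r\}\subseteq S$ with $2c-1\le m=m_1$ is $(S,m,r)$-amenable if $\mathrm D(m_i)\cap[m,\infty)\subseteq M$ for all $i$. The ground is $\{m,m+1,\ldots,m+a+b-1\}$, and the shadow of $M$ is $M\cap\{m,\ldots,m+a+b-1\}$. For a finite $M\subseteq S\cap[m,\infty)$, let $J$ be the set of $j\in\{0,\ldots,a-1\}$ such that $x-(m+b)=qa+j$ for some $x\in M$ and some integer $q\ge 0$; if $J\neq\emptyset$ let $j_0=\max J$ and let the wagon of $M$ be $W=\{x\in M\mid x-(m+b)=qa+j_0\text{ for some integer }q\}$. An element $P\in M$ is the pivot of $M$ if either $P<m+b$ and $P=\max M$, or $P=\max W$. An $(S,m,r)$-amenable set $M$ with pivot $P$ is ordered amenable if (i) its shadow is $\{m,m+1,\ldots,m+t\}$ for some integer $0\le t<a+b-1$, and (ii) whenever $s\in S\setminus M$ is such that $M\cup\{s\}$ is $(S,m,r+1)$-amenable with the same shadow as $M$, we have $s=P+a$. *)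

(* Defs.v *)
From HB Require Import structures.
From mathcomp Require Import all_boot all_order all_algebra.
From mathcomp Require Import finmap.
Set Implicit Arguments. Unset Strict Implicit. Unset Printing Implicit Defensive.
Local Open Scope fset_scope.

Definition inS (a b x : nat) : Prop :=
  exists s : seq nat, all (fun g => (a <= g <= a + b)%N) s /\ sumn s = x.

Definition is_conductor (a b c : nat) : Prop :=
  (forall x, (c <= x)%N -> inS a b x) /\
  (forall c', (forall x, (c' <= x)%N -> inS a b x) -> (c <= c')%N).

Definition inD (a b x alpha : nat) : Prop :=
  inS a b alpha /\ (alpha <= x)%N /\ inS a b (x - alpha).

Definition amenable (a b c m : nat) (M : {fset nat}) (r : nat) : Prop :=
  (2 * c - 1 <= m)%N /\ #|` M| = r /\
  (forall x, x \in M -> inS a b x) /\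
  m \in M /\ (forall x, x \in M -> (m <= x)%N) /\
  (forall mi, mi \in M -> forall y, inD a b mi y -> (m <= y)%N -> y \in M).

Definition shadow (a b m : nat) (M : {fset nat}) : {fset nat} :=
  [fset x in M | (x < m + a + b)%N].

Definition inJ (a b m : nat) (M : {fset nat}) (j : nat) : Prop :=
  (j < a)%N /\ exists x q : nat, x \in M /\ x = (m + b + q * a + j)%N.

Definition in_wagon (a b m : nat) (M : {fset nat}) (x : nat) : Prop :=
  exists j0 : nat,
    inJ a b m M j0 /\ (forall j, inJ a b m M j -> (j <= j0)%N) /\
    x \in M /\
    exists q : int, (x%:Z - (m + b)%:Z = q * a%:Z + j0%:Z)%R.

Definition is_pivot (a b m : nat) (M : {fset nat}) (P : nat) : Prop :=
  ((P < m + b)%N /\ P \in M /\ (forall x, x \in M -> (x <= P)%N)) \/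
  (in_wagon a b m M P /\ (forall x, in_wagon a b m M x -> (x <= P)%N)).

Definition ordered_amenable (a b c m : nat) (M : {fset nat}) (r : nat) : Prop :=
  amenable a b c m M r /\
  exists P, is_pivot a b m M P /\
    (exists t, (t < a + b - 1)%N /\
       forall x, x \in shadow a b m M <-> (m <= x <= m + t)%N) /\
    (forall s, inS a b s -> s \notin M ->
       amenable a b c m (M `|` [fset s]) r.+1 ->
       shadow a b m (M `|` [fset s]) = shadow a b m M ->
       s = (P + a)%N).

(* Main.v *)
Require Import Defs.
From HB Require Import structures.
From mathcomp Require Import all_boot all_order all_algebra.
From mathcomp Require Import finmap zify.
Local Open Scope fset_scope.

Lemma inS_iff a b x : inS a b x <-> exists k, (k * a <= x <= k * (a + b))%N.
Proof.
split.
- case=> s [hs <-]; elim: s hs => [|g s IH] /=; first by exists 0.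
  move/andP=> [/andP [h1 h2] /IH [k hk]]; exists k.+1; rewrite !mulSn; lia.
- case=> k; elim: k x => [|k IH] x hx.
    by exists [::]; split => //=; lia.
  have := IH (x - (a + minn b (x - k.+1 * a)))%N.
  case.
    move: hx; rewrite !mulSn; lia.
  move=> s [hs hsum]; exists ((a + minn b (x - k.+1 * a)) :: s)%N; split.
    by rewrite /= hs andbT; apply/andP; split; lia.
  rewrite /= hsum. move: hx; rewrite !mulSn; lia.
Qed.

Lemma arJ a b q q' j k Y : (j < a)%N -> (q * b < a)%N -> (k * a <= Y <= k * (a + b))%N ->
  (Y + q' * a + j + b = q * a + q * b)%N -> (j + b <= q * b)%N.
Proof.
move=> hj hqb hY hE.
have [hlt|hge] := ltnP (q' + k) q.
  have : ((q' + k).+1 * a <= q * a)%N by rewrite leq_mul2r hlt orbT.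
  have : (k.+1 * b <= q * b)%N by rewrite leq_mul2r; apply/orP; right; lia.
  move: hY; rewrite !mulSn mulnDl mulnDr; lia.
have [hgt|hle] := ltnP q (q' + k).
  have : (q.+1 * a <= (q' + k) * a)%N by rewrite leq_mul2r hgt orbT.
  rewrite mulSn mulnDl; lia.
have hqq : q = (q' + k)%N by lia. subst q.
rewrite mulnDl in hE; move: hY; rewrite mulnDr. lia.
Qed.

Lemma arSh a b q k Y z : (q * b < a)%N -> (k * a <= Y <= k * (a + b))%N ->
  (Y + z = q * a + q * b)%N -> (z < a + b)%N -> (z <= q * b)%N.
Proof.
move=> hqb hY hE hz.
have [hlt|hge] := ltnP k q.
  have : (k.+1 * (a+b) <= q * (a+b))%N by rewrite leq_mul2r hlt orbT.
  rewrite !mulSn !mulnDr; move: hY; rewrite mulnDr; lia.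
have : (q * a <= k * a)%N by rewrite leq_mul2r hge orbT.
lia.
Qed.

Definition Sk a b x := exists k, (k * a <= x <= k * (a + b))%N.

Lemma arFin a b q e : (0 < b)%N -> (q * b < a)%N -> ~ Sk a b e -> Sk a b (e + a) -> Sk a b (e + a + b) ->
  (e + a + b <= q * (a + b))%N -> False.
Proof.
move=> hb hqb hne [k1 h1] [k2 h2] hle.
case: k1 h1 => [|j] h1; first lia.
have hej : (j * (a + b) < e)%N.
  rewrite ltnNge; apply/negP => hh; apply: hne; exists j.
  move: h1; rewrite !mulSn mulnDr; lia.
have hk2 : (j.+1 < k2)%N.
  rewrite ltnNge; apply/negP => hh.
  have : (k2 * (a + b) <= j.+1 * (a+b))%N by rewrite leq_mul2r hh orbT.
  move: h1 h2 hej; rewrite !mulSn !mulnDr; lia.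
have hq : (j.+1 < q)%N.
  rewrite ltnNge; apply/negP => hh.
  have : (q * (a + b) <= j.+1 * (a+b))%N by rewrite leq_mul2r hh orbT.
  move: h1 h2 hej hle; rewrite !mulSn !mulnDr; lia.
have : (j.+2 * a <= k2 * a)%N by rewrite leq_mul2r hk2 orbT.
have : (j.+2 * b <= q * b)%N by rewrite leq_mul2r hq orbT.
move: h1 h2 hej; rewrite !mulSn !mulnDr; lia.
Qed.

Theorem lemma4p14 (a b : nat) (hb : (0 < b)%N) (hba : (b < a)%N)
  (c : nat) (hc : is_conductor a b c) (m : nat) (hm : (2 * c - 1 <= m)%N)
  (q : nat) (hq : (0 < q)%N) (hqb : (q * b < a)%N)
  (M : {fset nat})
  (hM : forall x, x \in M <-> ((m <= x)%N /\ inD a b (m + q * a + q * b) x)) :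
  ordered_amenable a b c m M #|` M|.
Proof.
have hc1 : (1 <= c)%N.
  rewrite lt0n; apply/negP => /eqP hc0.
  have := hc.1 1%N; rewrite hc0 => /(_ isT) /inS_iff [[|k]]; rewrite ?mulSn; lia.
have inSge : forall x, (m <= x)%N -> inS a b x.
  move=> x hx; apply: hc.1; lia.
have inS_add : forall x y, inS a b x -> inS a b y -> inS a b (x + y).
  move=> x y /inS_iff [k1 h1] /inS_iff [k2 h2]; apply/inS_iff; exists (k1 + k2)%N.
  rewrite !mulnDl; lia.
have small : forall y, (y < a)%N -> inS a b y -> y = 0%N.
  move=> y hy /inS_iff [[|k]]; rewrite ?mulSn; lia.
case: q hq hqb hM => [//|q0] _ hqb hM.
set N := (m + q0.+1 * a + q0.+1 * b)%N.
have memM : forall x, x \in M <-> [/\ (m <= x)%N, (x <= N)%N & inS a b (N - x)].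
  move=> x; rewrite hM; split.
    by case=> h1 [_ [h2 h3]]; split.
  by case=> h1 h2 h3; split => //; split; [apply: inSge | split].
have NmS : forall x, (m <= x)%N -> (q0.+1 * a <= N - x <= q0.+1 * (a + b))%N -> x \in M.
  move=> x hx hr; apply/memM; split => //.
    move: hr; rewrite mulnDr /N; lia.
  by apply/inS_iff; exists q0.+1.
have NinM : N \in M.
  apply/memM; split; rewrite ?subnn //; first by rewrite /N; lia.
  by apply/inS_iff; exists 0%N.
split.
  split => //; split => //; split.
    by move=> x /memM [h1 _ _]; apply: inSge.
  split.
    apply: NmS => //; rewrite mulnDr /N; lia.
  split; first by move=> x /memM [].
  move=> mi /memM [h1 h2 h3] y [hyS [hy1 hy2]] hmy; apply/memM; split => //.
    lia.
  have -> : (N - y = (N - mi) + (mi - y))%N by lia.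
  exact: inS_add.
exists N; split.
  right; split; last by move=> x [j0 [_ [_ [/memM [_ hx _] _]]]].
  exists (q0 * b)%N; split.
    split; first by move: hqb; rewrite mulSn; lia.
    exists (m + q0.+1 * b)%N, 0%N; split; last by rewrite mulSn; lia.
    apply: NmS; first lia.
    rewrite mulnDr /N; lia.
  split.
    move=> j [hj [x [q' [/memM [h1 h2 h3] hx]]]].
    move: h3 => /inS_iff [k hk].
    have := @arJ a b q0.+1 q' j k (N - x) hj hqb hk (_ : ((N - x) + q' * a + j + b = q0.+1 * a + q0.+1 * b)%N).
    rewrite mulSn; move=> H; suff : (j + b <= b + q0 * b)%N by lia.
    apply: H; rewrite /N; lia.
  split => //.
  exists (Posz q0.+1); rewrite /N; lia.
split.
  exists (q0.+1 * b)%N; split; first lia.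
  move=> x; rewrite /shadow !inE; split.
    move/andP => [/memM [h1 h2 /inS_iff [k hk]] hlt].
    have := @arSh a b q0.+1 k (N - x) (x - m) hqb hk (_ : ((N - x) + (x - m) = q0.+1 * a + q0.+1 * b)%N) (_ : (x - m < a + b)%N).
    move=> H; apply/andP; split => //.
    suff : (x - m <= q0.+1 * b)%N by lia.
    by apply: H; rewrite /N; lia.
  move/andP => [h1 h2]; apply/andP; split; last lia.
  apply: NmS => //; rewrite mulnDr /N; lia.
move=> s hsS hsM [_ [_ [_ [_ [hlow hcl]]]]] hsh.
have sin : s \in M `|` [fset s] by rewrite in_fsetU in_fset1 eqxx orbT.
have hms := hlow s sin.
have hbig : (m + a + b <= s)%N.
  rewrite leqNgt; apply/negP => hlt.
  have : s \in shadow a b m (M `|` [fset s]).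
   by rewrite /shadow !inE eqxx orbT hlt.
  by rewrite hsh /shadow !inE (negbTE hsM).
have hy1 : (s - a)%N \in M.
  have : (s - a)%N \in M `|` [fset s].
    apply: (hcl s sin).
    - split; first by apply: inSge; lia.
    split; first lia.
    have -> : (s - (s - a) = a)%N by lia.
    by apply/inS_iff; exists 1%N; lia.
    - lia.
  rewrite in_fsetU in_fset1 => /orP [//|/eqP]; lia.
have hy2 : (s - a - b)%N \in M.
  have : (s - a - b)%N \in M `|` [fset s].
    apply: (hcl s sin).
    - split; first by apply: inSge; lia.
    split; first lia.
    have -> : (s - (s - a - b) = a + b)%N by lia.
    by apply/inS_iff; exists 1%N; lia.
    - lia.
  rewrite in_fsetU in_fset1 => /orP [//|/eqP]; lia.
move: hy1 hy2 => /memM [_ h11 h12] /memM [_ h21 h22].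
have [hsN|hsN] := leqP s N.
  have hne : ~ Sk a b (N - s).
    move=> /inS_iff hS; apply/negP: hsM; apply/negPn/memM; split => //.
  exfalso; apply: (@arFin a b q0.+1 (N - s) hb hqb hne).
  - by apply/inS_iff; have -> : (N - s + a = N - (s - a))%N by lia.
  - by apply/inS_iff; have -> : (N - s + a + b = N - (s - a - b))%N by lia.
  - rewrite mulnDr /N; lia.
exfalso.
have h0 := small _ (_ : (N - (s - a) < a)%N) h12.
have hb0 := small (N - (s - a - b))%N (_ : (N - (s - a - b) < a)%N) h22.
lia.
Qed.
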